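(* Let $k$ be a real division algebra, $a_1,\dots,a_n\in k$ and $x_0\in k$ such that $x_i=T_{a_i}\cdots T_{a_1}x_0$ is defined for $0\le i\le n$. Define $P[\cdot],Q[\cdot]$ recursively by $P[\wedge]=0$, $Q[\wedge]=1$, $P[a_n]=1$, $Q[a_n]=a_n$, and for $i<n$, $P[a_i,\dots,a_n]=Q[a_{i+1},\dots,a_n]$, $Q[a_i,\dots,a_n]=a_iQ[a_{i+1},\dots,a_n]+P[a_{i+1},\dots,a_n]$; let $P_n=P[a_1,\dots,a_n]$, $Q_n=Q[a_1,\dots,a_n]$. If $Q[a_i,\dots,a_n]\ne0$ for each $1\le i\le n$, then \[\|P_nQ_n^{-1}-x_0\|=\frac{\prod_{i=0}^n\|x_i\|}{\|Q_n\|}.\]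
   Context: $k\in\{\mathbb{R},\mathbb{C},\mathbb{H},\mathbb{O}\}$ with Euclidean norm $\|x\|^2=x\overline x$; $T_ax=x^{-1}-a$. $\wedge$ denotes the empty digit string. *)

(* Defs.v *)
From Stdlib Require Import Reals List.
Open Scope R_scope.

(* Cayley--Dickson algebras over R: CD 0 = R, CD 1 = C, CD 2 = H, CD 3 = O. *)
Fixpoint CD (m : nat) : Type :=
  match m with O => R | S p => (CD p * CD p)%type end.

Fixpoint cd_zero (m : nat) : CD m :=
  match m return CD m with O => 0 | S p => (cd_zero p, cd_zero p) end.

Fixpoint cd_real (m : nat) (r : R) : CD m :=
  match m return CD m with O => r | S p => (cd_real p r, cd_zero p) end.

Definition cd_one (m : nat) : CD m := cd_real m 1.

Fixpoint cd_add (m : nat) : CD m -> CD m -> CD m :=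
  match m return CD m -> CD m -> CD m with
  | O => Rplus
  | S p => fun x y => (cd_add p (fst x) (fst y), cd_add p (snd x) (snd y))
  end.

Fixpoint cd_opp (m : nat) : CD m -> CD m :=
  match m return CD m -> CD m with
  | O => Ropp
  | S p => fun x => (cd_opp p (fst x), cd_opp p (snd x))
  end.

Definition cd_sub (m : nat) (x y : CD m) : CD m := cd_add m x (cd_opp m y).

Fixpoint cd_scale (m : nat) (r : R) : CD m -> CD m :=
  match m return CD m -> CD m with
  | O => fun x => r * x
  | S p => fun x => (cd_scale p r (fst x), cd_scale p r (snd x))
  end.

Fixpoint cd_conj (m : nat) : CD m -> CD m :=
  match m return CD m -> CD m with
  | O => fun x => x
  | S p => fun x => (cd_conj p (fst x), cd_opp p (snd x))
  end.

Fixpoint cd_mul (m : nat) : CD m -> CD m -> CD m :=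
  match m return CD m -> CD m -> CD m with
  | O => Rmult
  | S p => fun x y =>
      (cd_sub p (cd_mul p (fst x) (fst y)) (cd_mul p (cd_conj p (snd y)) (snd x)),
       cd_add p (cd_mul p (snd y) (fst x)) (cd_mul p (snd x) (cd_conj p (fst y))))
  end.

Fixpoint cd_norm2 (m : nat) : CD m -> R :=
  match m return CD m -> R with
  | O => fun x => x * x
  | S p => fun x => cd_norm2 p (fst x) + cd_norm2 p (snd x)
  end.

Definition cd_norm (m : nat) (x : CD m) : R := sqrt (cd_norm2 m x).

Definition cd_inv (m : nat) (x : CD m) : CD m := cd_scale m (/ cd_norm2 m x) (cd_conj m x).

Definition T (m : nat) (a x : CD m) : CD m := cd_sub m (cd_inv m x) a.

Fixpoint orbit (m : nat) (a : nat -> CD m) (x0 : CD m) (i : nat) : CD m :=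
  match i with
  | O => x0
  | S j => T m (a (S j)) (orbit m a x0 j)
  end.

(* (P[s], Q[s]) for a digit string s = [a_i; ...; a_n] *)
Fixpoint PQ (m : nat) (s : list (CD m)) : CD m * CD m :=
  match s with
  | nil => (cd_zero m, cd_one m)
  | b :: nil => (cd_one m, b)
  | b :: t => let (Pt, Qt) := PQ m t in (Qt, cd_add m (cd_mul m b Qt) Pt)
  end.

Definition Pof (m : nat) (s : list (CD m)) : CD m := fst (PQ m s).
Definition Qof (m : nat) (s : list (CD m)) : CD m := snd (PQ m s).

(* the string a_i, ..., a_n *)
Definition digits (m : nat) (a : nat -> CD m) (i n : nat) : list (CD m) :=
  map a (seq i (S n - i)).

Fixpoint prodR (f : nat -> R) (n : nat) : R :=
  match n with O => f O | S j => prodR f j * f (S j) end.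

(* Main.v *)
Require Import Defs.
From Stdlib Require Import Reals List Lra Lia.
Open Scope R_scope.

Ltac dall := repeat match goal with x : CD _ |- _ => simpl in x | x : prod _ _ |- _ => destruct x end.
Ltac spl := repeat match goal with |- (_, _) = (_, _) => f_equal end.
Ltac brute m := destruct m as [|[|[|[|m]]]]; intros; [ | | | | exfalso; lia]; dall;
  unfold cd_inv, cd_one in *; simpl; unfold cd_sub; simpl; spl; ring.

Fixpoint ip (p : nat) : CD p -> CD p -> R :=
  match p return CD p -> CD p -> R with
  | O => fun x y => x * y
  | S q => fun x y => ip q (fst x) (fst y) + ip q (snd x) (snd y)
  end.

Lemma L_scale_scale (m : nat) (hm : (m <= 3)%nat) : forall r s (x : CD m), cd_scale m r (cd_scale m s x) = cd_scale m (r*s) x.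
Proof. revert hm; brute m. Qed.
Lemma L_scale1 (m : nat) (hm : (m <= 3)%nat) : forall (x : CD m), cd_scale m 1 x = x.
Proof. revert hm; brute m. Qed.
Lemma L_conj_conj (m : nat) (hm : (m <= 3)%nat) : forall (x : CD m), cd_conj m (cd_conj m x) = x.
Proof. revert hm; brute m. Qed.
Lemma L_N_conj (m : nat) (hm : (m <= 3)%nat) : forall (x : CD m), cd_norm2 m (cd_conj m x) = cd_norm2 m x.
Proof. revert hm; brute m. Qed.
Lemma L_N_scale (m : nat) (hm : (m <= 3)%nat) : forall r (x : CD m), cd_norm2 m (cd_scale m r x) = r*r*cd_norm2 m x.
Proof. revert hm; brute m. Qed.
Lemma L_conj_scale (m : nat) (hm : (m <= 3)%nat) : forall r (x : CD m), cd_conj m (cd_scale m r x) = cd_scale m r (cd_conj m x).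
Proof. revert hm; brute m. Qed.
Lemma L_mul_scale_r (m : nat) (hm : (m <= 3)%nat) : forall r (x y : CD m), cd_mul m x (cd_scale m r y) = cd_scale m r (cd_mul m x y).
Proof. revert hm; brute m. Qed.
Lemma L_mul_scale_l (m : nat) (hm : (m <= 3)%nat) : forall r (x y : CD m), cd_mul m (cd_scale m r x) y = cd_scale m r (cd_mul m x y).
Proof. revert hm; brute m. Qed.
Lemma L_mul_addl (m : nat) (hm : (m <= 3)%nat) : forall (x y z : CD m), cd_mul m (cd_add m x y) z = cd_add m (cd_mul m x z) (cd_mul m y z).
Proof. revert hm; brute m. Qed.
Lemma L_mul0l (m : nat) (hm : (m <= 3)%nat) : forall (y : CD m), cd_mul m (cd_zero m) y = (cd_zero m).
Proof. revert hm; brute m. Qed.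
Lemma L_mul1r (m : nat) (hm : (m <= 3)%nat) : forall (x : CD m), cd_mul m x (cd_one m) = x.
Proof. revert hm; brute m. Qed.
Lemma L_add0r (m : nat) (hm : (m <= 3)%nat) : forall (x : CD m), cd_add m x (cd_zero m) = x.
Proof. revert hm; brute m. Qed.
Lemma L_inv_one (m : nat) (hm : (m <= 3)%nat) : cd_inv m (cd_one m) = (cd_one m).
Proof. revert hm. destruct m as [|[|[|[|m']]]]; [ | | | | intros; exfalso; lia]; intros;
  unfold cd_inv, cd_one; simpl; unfold cd_sub; simpl; spl; field; lra. Qed.
Lemma L_N_one (m : nat) (hm : (m <= 3)%nat) : cd_norm2 m (cd_one m) = 1.
Proof. revert hm; brute m. Qed.
Lemma L_add_sub (m : nat) (hm : (m <= 3)%nat) : forall (a b : CD m), cd_add m a (cd_sub m b a) = b.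
Proof. revert hm; brute m. Qed.
Lemma L_N_subadd (m : nat) (hm : (m <= 3)%nat) : forall (a r x : CD m), cd_norm2 m (cd_sub m (cd_add m a r) (cd_add m a x)) = cd_norm2 m (cd_sub m r x).
Proof. revert hm; brute m. Qed.
Lemma L_N_sub0 (m : nat) (hm : (m <= 3)%nat) : forall (x : CD m), cd_norm2 m (cd_sub m (cd_zero m) x) = cd_norm2 m x.
Proof. revert hm; brute m. Qed.
Lemma L_N_sub (m : nat) (hm : (m <= 3)%nat) : forall (u v : CD m), cd_norm2 m (cd_sub m u v) = cd_norm2 m u + cd_norm2 m v - 2 * ip m u v.
Proof. revert hm; brute m. Qed.
Lemma L_N_invsub (m : nat) (hm : (m <= 3)%nat) : forall r s (u v : CD m),
  cd_norm2 m (cd_sub m (cd_scale m r (cd_conj m u)) (cd_scale m s (cd_conj m v))) = r*r*cd_norm2 m u + s*s*cd_norm2 m v - 2*r*s*ip m u v.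
Proof. revert hm; brute m. Qed.
Lemma B1 (m : nat) (hm : (m <= 3)%nat) : forall (x y : CD m), cd_mul m (cd_mul m x y) (cd_conj m y) = cd_scale m (cd_norm2 m y) x.
Proof. revert hm; brute m. Qed.
Lemma B2 (m : nat) (hm : (m <= 3)%nat) : forall (x y : CD m), cd_norm2 m (cd_mul m x y) = cd_norm2 m x * cd_norm2 m y.
Proof. revert hm; brute m. Qed.
Lemma B3 (m : nat) (hm : (m <= 3)%nat) : forall (x y : CD m), cd_conj m (cd_mul m x y) = cd_mul m (cd_conj m y) (cd_conj m x).
Proof. revert hm; brute m. Qed.

Section S.
Variable m : nat.
Hypothesis hm : (m <= 3)%nat.

Notation N := (cd_norm2 m).
Notation mul := (cd_mul m).
Notation add := (cd_add m).
Notation sub := (cd_sub m).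
Notation scale := (cd_scale m).
Notation conj := (cd_conj m).
Notation inv := (cd_inv m).
Notation zero := (cd_zero m).
Notation one := (cd_one m).

Lemma N_nonneg : forall p (x : CD p), 0 <= cd_norm2 p x.
Proof. induction p; simpl; intros. apply (Rle_0_sqr (x : R)). apply Rplus_le_le_0_compat; apply IHp. Qed.

Lemma N_zero : forall p (x : CD p), cd_norm2 p x = 0 -> x = cd_zero p.
Proof. induction p; simpl; intros. apply (Rsqr_0_uniq (x : R)); exact H. destruct x as [x1 x2]; simpl in *.
  pose proof (N_nonneg p x1); pose proof (N_nonneg p x2).
  rewrite (IHp x1), (IHp x2); auto; lra. Qed.

Lemma nz (x : CD m) : x <> zero -> N x <> 0.
Proof. intros H H'. apply H, N_zero, H'. Qed.

Lemma N_pos (x : CD m) : N x <> 0 -> 0 < N x.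
Proof. pose proof (N_nonneg m x). lra. Qed.

Lemma D1 (x y : CD m) : N y <> 0 -> mul (mul x y) (inv y) = x.
Proof. intros. unfold cd_inv. rewrite L_mul_scale_r, B1, L_scale_scale, Rinv_l by auto.
  apply L_scale1.
  all: try assumption. Qed.

Lemma D3 (y : CD m) : N y <> 0 -> N (inv y) = / N y.
Proof. intros. unfold cd_inv. rewrite L_N_scale, L_N_conj. field; auto.
  all: try assumption. Qed.

Lemma D2 (y : CD m) : N y <> 0 -> inv (inv y) = y.
Proof. intros. unfold cd_inv at 1. rewrite D3 by auto. unfold cd_inv.
  rewrite L_conj_scale, L_conj_conj, L_scale_scale.
  replace (/ / N y * / N y) with 1 by (field; auto). apply L_scale1.
  all: try assumption. Qed.

Lemma D5 (x y : CD m) : N y <> 0 -> N (mul x (inv y)) = N x / N y.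
Proof. intros. rewrite B2, D3 by auto. field; auto.
  all: try assumption. Qed.

Lemma D4 (x y : CD m) : N x <> 0 -> N y <> 0 -> inv (mul x (inv y)) = mul y (inv x).
Proof. intros. unfold cd_inv at 1. rewrite D5 by auto.
  rewrite B3. unfold cd_inv at 1. rewrite L_conj_scale, L_conj_conj, L_mul_scale_l, L_scale_scale.
  unfold cd_inv. rewrite L_mul_scale_r. f_equal. field; auto.
  all: try assumption. Qed.

Lemma D6 (u v : CD m) : N u <> 0 -> N v <> 0 ->
  N (sub (inv u) (inv v)) = N (sub u v) / (N u * N v).
Proof. intros. unfold cd_inv. rewrite L_N_invsub, L_N_sub. field; auto.
  all: try assumption. Qed.

Definition rr (s : list (CD m)) := mul (Pof m s) (inv (Qof m s)).

Lemma Pof_cons b t : Pof m (b :: t) = Qof m t.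
Proof. destruct t as [|c t]. reflexivity. unfold Pof, Qof.
  change (PQ m (b :: c :: t)) with (let (Pt,Qt) := PQ m (c::t) in (Qt, add (mul b Qt) Pt)).
  destruct (PQ m (c :: t)). reflexivity.
  all: try assumption. Qed.

Lemma Qof_cons2 b c t : Qof m (b :: c :: t) = add (mul b (Qof m (c :: t))) (Pof m (c :: t)).
Proof. unfold Pof, Qof.
  change (PQ m (b :: c :: t)) with (let (Pt,Qt) := PQ m (c::t) in (Qt, add (mul b Qt) Pt)).
  destruct (PQ m (c :: t)). reflexivity.
  all: try assumption. Qed.

Lemma rr_nil : rr nil = zero.
Proof. unfold rr. apply L_mul0l.
  all: try assumption. Qed.

Lemma K1 b t : N (Qof m t) <> 0 -> add b (rr t) = mul (Qof m (b :: t)) (inv (Qof m t)).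
Proof. intros H. destruct t as [|c t].
  - rewrite rr_nil, L_add0r by auto. unfold Qof at 2. simpl. fold (cd_one m).
    rewrite L_inv_one, L_mul1r by auto. reflexivity.
  - rewrite Qof_cons2, L_mul_addl, D1 by auto. reflexivity.
  all: try assumption. Qed.

Lemma K2 b t : N (Qof m t) <> 0 -> N (Qof m (b :: t)) <> 0 -> rr (b :: t) = inv (add b (rr t)).
Proof. intros. rewrite K1 by auto. rewrite D4 by auto. unfold rr. rewrite Pof_cons. reflexivity.
  all: try assumption. Qed.

Lemma K3 b t : N (Qof m t) <> 0 -> N (add b (rr t)) = N (Qof m (b :: t)) / N (Qof m t).
Proof. intros. rewrite K1 by auto. apply D5; auto.
  all: try assumption. Qed.

End S.

Lemma digits_cons m (a : nat -> CD m) i n : (i <= n)%nat -> digits m a i n = a i :: digits m a (S i) n.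
Proof. intros. unfold digits. replace (S n - i)%nat with (S (n - i)) by lia. reflexivity. Qed.

Lemma digits_nil m (a : nat -> CD m) n : digits m a (S n) n = nil.
Proof. unfold digits. replace (S n - S n)%nat with O by lia. reflexivity. Qed.

Fixpoint spr (f : nat -> R) (j k : nat) : R :=
  match k with O => f j | S k' => f j * spr f (S j) k' end.

Lemma spr_S f k : forall j, spr f j (S k) = spr f j k * f (j + S k)%nat.
Proof. induction k; intros j; simpl.
  - replace (j + 1)%nat with (S j) by lia. ring.
  - simpl in IHk. rewrite IHk. replace (S j + S k)%nat with (j + S (S k))%nat by lia. ring. Qed.

Lemma prodR_spr f n : prodR f n = spr f 0 n.
Proof. induction n. reflexivity. simpl prodR. rewrite IHn, spr_S. reflexivity. Qed.

Lemma prodR_nonneg f n : (forall i, 0 <= f i) -> 0 <= prodR f n.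
Proof. intros H; induction n; simpl. apply H. apply Rmult_le_pos; auto. Qed.

Lemma prodR_sqrt f n : (forall i, 0 <= f i) -> prodR (fun i => sqrt (f i)) n = sqrt (prodR f n).
Proof. intros H; induction n; simpl. reflexivity. rewrite IHn, sqrt_mult; auto.
  apply prodR_nonneg; auto. Qed.

Theorem corollary2p4 (m : nat) (hm : (m <= 3)%nat)
  (n : nat) (a : nat -> CD m) (x0 : CD m)
  (hdef : forall i : nat, (i < n)%nat -> orbit m a x0 i <> cd_zero m)
  (hQ : forall i : nat, (1 <= i <= n)%nat -> Qof m (digits m a i n) <> cd_zero m) :
  cd_norm m (cd_sub m (cd_mul m (Pof m (digits m a 1 n))
                              (cd_inv m (Qof m (digits m a 1 n)))) x0)
  = prodR (fun i => cd_norm m (orbit m a x0 i)) n / cd_norm m (Qof m (digits m a 1 n)).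
Proof.
  set (f := fun i => cd_norm2 m (orbit m a x0 i)).
  assert (HQ : forall i, (1 <= i)%nat -> (i <= S n)%nat -> cd_norm2 m (Qof m (digits m a i n)) <> 0).
  { intros i H1 H2. destruct (Nat.eq_dec i (S n)) as [->|Hne].
    - rewrite digits_nil. unfold Qof; simpl. fold (cd_one m). rewrite L_N_one by auto. lra.
    - apply nz; auto. apply hQ. lia. }
  assert (Claim : forall k j, (j + k = n)%nat ->
    cd_norm2 m (cd_sub m (rr m (digits m a (S j) n)) (orbit m a x0 j))
    = spr f j k / cd_norm2 m (Qof m (digits m a (S j) n))).
  { induction k; intros j Hj.
    - assert (j = n) by lia; subst j. rewrite digits_nil, rr_nil by auto.
      unfold Qof; simpl. fold (cd_one m). rewrite L_N_one, L_N_sub0 by auto. unfold f. field.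
    - assert (Hjn : (S j <= n)%nat) by lia.
      rewrite (digits_cons m a (S j) n Hjn).
      set (t := digits m a (S (S j)) n).
      assert (Ht : cd_norm2 m (Qof m t) <> 0) by (apply HQ; lia).
      assert (Hs : cd_norm2 m (Qof m (a (S j) :: t)) <> 0).
      { unfold t; rewrite <- digits_cons by lia. apply HQ; lia. }
      assert (Hx : cd_norm2 m (orbit m a x0 j) <> 0) by (apply nz; auto; apply hdef; lia).
      assert (Ex : orbit m a x0 j = cd_inv m (cd_add m (a (S j)) (orbit m a x0 (S j)))).
      { simpl. unfold T. rewrite L_add_sub by auto. rewrite D2; auto. }
      assert (Hv : cd_norm2 m (cd_add m (a (S j)) (orbit m a x0 (S j))) <> 0).
      { simpl. unfold T. rewrite L_add_sub, D3 by auto. apply Rinv_neq_0_compat; auto. }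
      assert (Hu : cd_norm2 m (cd_add m (a (S j)) (rr m t)) <> 0).
      { rewrite K3 by auto. unfold Rdiv. apply Rmult_integral_contrapositive; split; auto.
        apply Rinv_neq_0_compat; auto. }
      rewrite K2 by auto. rewrite Ex at 1. rewrite D6 by auto.
      rewrite L_N_subadd by auto. pose proof (IHk (S j) ltac:(lia)) as IH; fold t in IH; rewrite IH.
      rewrite K3 by auto.
      assert (Hv' : cd_norm2 m (cd_add m (a (S j)) (orbit m a x0 (S j))) = / f j).
      { unfold f. simpl. unfold T. rewrite L_add_sub, D3 by auto. reflexivity. }
      rewrite Hv'. simpl spr. fold t. field. unfold f in *. auto. }
  specialize (Claim n 0%nat (eq_refl _)).
  unfold rr in Claim. cbn [orbit] in Claim. unfold cd_norm. rewrite Claim.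
  rewrite prodR_sqrt by (intros; apply N_nonneg). rewrite prodR_spr.
  apply sqrt_div_alt. apply N_pos; auto. apply HQ; lia.
Qed.
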